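(* Consider a CRN having at least one conservation law with all entries strictly positive, and let $\{\mathbf x_i\}$ denote its conservation laws. Let $A=(\mathcal S_A,\mathcal R_A)$ be a MAS with core set $A_C$ such that $|\mathcal S_A|=|A_C|+1$, and let $T$ be its FWMC partition. Then the species-productive cone of $A$ equals its partition-productive cone: $\mathcal P(A)=\mathcal Q(T)$.
   Context: A chemical reaction network (CRN) consists of a finite species set $\mathcal S$ and a finite set $\mathcal R$ of reactions; each reaction $r$ is written $r^-\to r^+$ with input complex $r^-\in\mathbb Z_{\ge0}^{\mathcal S}$ and output complex $r^+\in\mathbb Z_{\ge0}^{\mathcal S}$. The input and output matrices $\mathbb S^-,\mathbb S^+$ have columns $r^-$, resp. $r^+$; the stoichiometric matrix is $\mathbb S=\mathbb S^+-\mathbb S^-$. A conservation law is a vector $\mathbf x\in\mathbb R^{\mathcal S}$ with $\mathbf x^T\mathbb S=\mathbf0$. $(\mathbb A)_M^N$ denotes the submatrix with rows in $M$ and columns in $N$. $\mathbf v\gg\mathbf 0$ means all entries $>0$; $\mathbf v>\mathbf 0$ means all entries $\ge0$ and $\mathbf v\ne\mathbf 0$. A motif $(\mathcal M,\mathcal R')$ ($\mathcal M\subseteq\mathcal S,\mathcal R'\subseteq\mathcal R$) is exclusively autocatalytic if: (i) some $\mathbf v\gg\mathbf0$ in $\mathbb R^{\mathcal R'}$ has $(\mathbb S)_{\mathcal M}^{\mathcal R'}\mathbf v\gg\mathbf 0$; (ii) every row and (iii) every column of $(\mathbb S^-)_{\mathcal M}^{\mathcal R'}$ is semi-positive. An autocatalytic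 core is an exclusively autocatalytic motif $(A_C,\mathcal R_A)$ no proper sub-motif ($\mathcal M'\subseteq A_C$, $\mathcal R''\subseteq\mathcal R_A$) of which is exclusively autocatalytic. The minimal autocatalytic subnetwork (MAS) $A=(\mathcal S_A,\mathcal R_A)$ of a core $(A_C,\mathcal R_A)$ has reaction set $\mathcal R_A$ and species set $\mathcal S_A$ consisting of all species occurring in some input or output complex of a reaction in $\mathcal R_A$; each MAS is assumed to have a unique core. Put $\overline{\mathbb S}=(\mathbb S)_{\mathcal S_A}^{\mathcal R_A}$ and $\overline{\mathbb S}_C=(\mathbb S)_{A_C}^{\mathcal R_A}$ (a square invertible matrix). The species-productive cone is $\mathcal P(A)=\{\overline{\mathbb S}\,\overline{\mathbb S}_C^{-1}\mathbf u:\mathbf u\ge\mathbf0\}\subseteq\mathbb R^{\mathcal S_A}$. FWMC partition $T=\{T_F,T_W,T_{M/C},T_C\}$ of $\mathcal S_A$: the food set $T_F$ consists of species whose row in $\overline{\mathbb S}$ has all entries $\le0$; the waste set $T_W$ those whose row has all entries $\ge0$; the member set those whose row has both positive and negative entries; $T_C=A_C$ (contained in the member set); $T_{M/C}$ = member set minus $A_C$. Partition-productive cone: with $e_i$ the standard basis vectors of $\mathbb R^{\mathcal S_A}$, let $\mathcal B_T=\{-e_f:f\in T_F\}\cup\{e_w:w\in T_W\}\cup\{-e_m,e_m:m\in T_{M/C}\}\cup\{e_c:c\in T_C\}$, and $\mathcal Q(T)=\mathrm{cone}(\mathcal B_T)\cap\{\mathbf y\in\mathbb R^{\mathcal S_A}:\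 \mathbf x_i|_{\mathcal S_A}\cdot\mathbf y=0\ \text{for all } i\}$, where $\mathbf x_i|_{\mathcal S_A}$ is the restriction of $\mathbf x_i$ to the coordinates in $\mathcal S_A$. *)

(* Defs.v *)
(* A CRN is given by finite types of species S and reactions Rx,
   and input/output matrices Sm (= S^-) and Sp (= S^+) with nat entries.
   Vectors in R^X are functions X -> R; vectors in R^{S_A} are represented by
   functions S -> R vanishing outside S_A. *)
From mathcomp Require Import all_boot all_order all_algebra.
Set Implicit Arguments. Unset Strict Implicit. Unset Printing Implicit Defensive.
Import Order.TTheory GRing.Theory Num.Theory.
Local Open Scope ring_scope.

Section CRN.
Variables (R : realFieldType) (S Rx : finType) (Sm Sp : S -> Rx -> nat).

Definition stoich (s : S) (r : Rx) : R := (Sp s r)%:R - (Sm s r)%:R.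

Definition conservation_law (x : S -> R) : Prop :=
  forall r : Rx, \sum_(s : S) x s * stoich s r = 0.

Definition excl_autocatalytic (M : {set S}) (Rs : {set Rx}) : Prop :=
  [/\ M != set0, Rs != set0,
   (exists v : Rx -> R, (forall r, r \in Rs -> 0 < v r) /\
      (forall s, s \in M -> 0 < \sum_(r in Rs) stoich s r * v r)),
   (forall s, s \in M -> exists2 r, r \in Rs & (0 < Sm s r)%N) &
   (forall r, r \in Rs -> exists2 s, s \in M & (0 < Sm s r)%N)].

Definition autocatalytic_core (AC : {set S}) (RA : {set Rx}) : Prop :=
  excl_autocatalytic AC RA /\
  (forall (M : {set S}) (Rs : {set Rx}), M \subset AC -> Rs \subset RA ->
     (M, Rs) <> (AC, RA) -> ~ excl_autocatalytic M Rs).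

Definition MAS_species (RA : {set Rx}) : {set S} :=
  [set s | [exists r in RA, (0 < Sm s r)%N || (0 < Sp s r)%N]].

Definition core_matrix_invertible (AC : {set S}) (RA : {set Rx}) : Prop :=
  #|AC| = #|RA| /\
  (forall v : Rx -> R, (forall c, c \in AC -> \sum_(r in RA) stoich c r * v r = 0) ->
     forall r, r \in RA -> v r = 0).

(* species-productive cone: { Sbar Sbar_C^{-1} u : u >= 0 };
   Sbar_C^{-1} u is the (unique) v on R_A with Sbar_C v = u. *)
Definition species_productive_cone (AC : {set S}) (RA : {set Rx}) (y : S -> R) : Prop :=
  (forall s, s \notin MAS_species RA -> y s = 0) /\
  exists u : S -> R, (forall c, c \in AC -> 0 <= u c) /\
    exists v : Rx -> R,
      (forall c, c \in AC -> \sum_(r in RA) stoich c r * v r = u c) /\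
      (forall s, s \in MAS_species RA -> y s = \sum_(r in RA) stoich s r * v r).

Definition food_set (RA : {set Rx}) : {set S} :=
  [set s in MAS_species RA | [forall r in RA, stoich s r <= 0]].
Definition waste_set (RA : {set Rx}) : {set S} :=
  [set s in MAS_species RA | [forall r in RA, 0 <= stoich s r]].
Definition member_set (RA : {set Rx}) : {set S} :=
  [set s in MAS_species RA |
     [exists r in RA, 0 < stoich s r] && [exists r in RA, stoich s r < 0]].
Definition TMC (AC : {set S}) (RA : {set Rx}) : {set S} := member_set RA :\: AC.

Definition gen (p : S * bool) : S -> R :=
  fun t => if t == p.1 then (if p.2 then 1 else -1) else 0.

Definition BT (AC : {set S}) (RA : {set Rx}) : {set S * bool} :=
  [set p | [|| (p.1 \in food_set RA) && ~~ p.2,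
               (p.1 \in waste_set RA) && p.2,
               p.1 \in TMC AC RA |
               (p.1 \in AC) && p.2]].

Definition in_cone (B : {set S * bool}) (y : S -> R) : Prop :=
  exists lam : S * bool -> R, (forall p, 0 <= lam p) /\
    forall t, y t = \sum_(p in B) lam p * gen p t.

Definition partition_productive_cone (AC : {set S}) (RA : {set Rx}) (y : S -> R) : Prop :=
  in_cone (BT AC RA) y /\
  forall x : S -> R, conservation_law x ->
    \sum_(s in MAS_species RA) x s * y s = 0.

End CRN.

(* Main.v *)
Require Import Defs.
From mathcomp Require Import all_boot all_order all_algebra.
From mathcomp Require Import lra.
Set Implicit Arguments. Unset Strict Implicit. Unset Printing Implicit Defensive.
Import Order.TTheory GRing.Theory Num.Theory.
Local Open Scope ring_scope.

Lemma surj_lemma (F : fieldType) (S Rx : finType) (A : {set S}) (B : {set Rx})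
  (f : S -> Rx -> F) :
  #|A| = #|B| ->
  (forall v : Rx -> F, (forall c, c \in A -> \sum_(r in B) f c r * v r = 0) ->
     forall r, r \in B -> v r = 0) ->
  forall u : S -> F, exists v : Rx -> F,
    forall c, c \in A -> \sum_(r in B) f c r * v r = u c.
Proof.
move=> h Hinj u.
pose eA (i : 'I_#|B|) : S := enum_val (cast_ord (esym h) i).
pose eB (j : 'I_#|B|) : Rx := enum_val j.
pose M : 'M[F]_(#|B|) := \matrix_(i, j) f (eA i) (eB j).
pose vof (w : 'cV[F]_(#|B|)) (r : Rx) := \sum_j (if eB j == r then w j 0 else 0).
have vofE w j : vof w (eB j) = w j 0.
  rewrite /vof (bigD1 j) //= eqxx big1 ?addr0 // => j' /negbTE.
  by rewrite (inj_eq enum_val_inj) => ->.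
have sumE w c : \sum_(r in B) f c r * vof w r = \sum_j f c (eB j) * w j 0.
  rewrite big_enum_val; apply: eq_bigr => j _; by rewrite vofE.
have eAsurj c : c \in A -> exists i, eA i = c.
  move=> Hc; exists (cast_ord h (enum_rank_in Hc c)).
  by rewrite /eA cast_ordK enum_rankK_in.
have MwE w i : (M *m w) i 0 = \sum_j f (eA i) (eB j) * w j 0.
  by rewrite mxE; apply: eq_bigr => j _; rewrite mxE.
have Minj (w : 'cV[F]_(#|B|)) : M *m w = 0 -> w = 0.
  move=> Hw; apply/matrixP => j k; rewrite (ord1 k) mxE -vofE.
  apply: Hinj; last exact: enum_valP.
  move=> c /eAsurj [i <-]; rewrite sumE -MwE Hw mxE //.
have Munit : M \in unitmx.
  rewrite -unitmx_tr -row_free_unit -kermx_eq0; apply/eqP/matrixP => i j.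
  have := Minj (row i (kermx M^T))^T.
  rewrite -(trmxK M) -trmx_mul trmxK -row_mul mulmx_ker row0 trmx0 => /(_ erefl).
  move/matrixP => /(_ j 0); by rewrite !mxE.
pose U : 'cV[F]_(#|B|) := \col_i u (eA i).
pose W := invmx M *m U.
exists (vof W) => c /eAsurj [i <-].
rewrite sumE -MwE /W mulmxA mulmxV // mul1mx mxE //.
Qed.
Lemma sum_gen (R : realFieldType) (S : finType) (B : {set S * bool}) (lam : S * bool -> R) t :
  \sum_(p in B) lam p * gen R p t =
  (if (t,true) \in B then lam (t,true) else 0) - (if (t,false) \in B then lam (t,false) else 0).
Proof.
have ne : (t,false) != (t,true) by rewrite xpair_eqE negb_and orbT.
rewrite big_mkcond (bigD1 (t,true)) //= (bigD1 (t,false)) //= big1 ?addr0.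
  rewrite /gen /= eqxx.
  by case: ((t,true) \in B); case: ((t,false) \in B); rewrite ?mulr1 ?mulrN1 ?subr0 ?addr0 ?add0r ?sub0r.
move=> [s b] /andP [H1 H2]; rewrite /gen /=.
case: eqP => [Hts|]; last by rewrite mulr0 if_same.
by subst; case: b H1 H2; rewrite eqxx.
Qed.

Lemma in_coneP (R : realFieldType) (S : finType) (B : {set S * bool}) (y : S -> R) :
  in_cone B y <-> forall t, (0 < y t -> (t,true) \in B) /\ (y t < 0 -> (t,false) \in B).
Proof.
split.
  move=> [lam [Hpos Hy]] t; rewrite Hy sum_gen.
  have := Hpos (t,true); have := Hpos (t,false).
  by case: ((t,true) \in B); case: ((t,false) \in B) => // a b; split => // H; exfalso; lra.
move=> H; exists (fun p => if p.2 then (if 0 < y p.1 then y p.1 else 0)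
                     else (if y p.1 < 0 then - y p.1 else 0)); split.
  move=> [s b] /=; case: b; case: ifP => // h; lra.
move=> t; rewrite sum_gen /=; have [H1 H2] := H t.
case: (ltgtP (y t) 0) => hy.
- by rewrite (H2 hy) if_same add0r opprK.
- by rewrite (H1 hy) if_same subr0.
- by rewrite hy !if_same subr0.
Qed.
Theorem mainTheorem10 (R : realFieldType) (S Rx : finType)
    (Sm Sp : S -> Rx -> nat) (AC : {set S}) (RA : {set Rx}) :
  (exists x : S -> R, (forall s, 0 < x s) /\ conservation_law Sm Sp x) ->
  autocatalytic_core R Sm Sp AC RA ->
  (forall M : {set S}, autocatalytic_core R Sm Sp M RA -> M = AC) ->
  core_matrix_invertible R Sm Sp AC RA ->
  #|MAS_species Sm Sp RA| = #|AC|.+1 ->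
  forall y : S -> R,
    species_productive_cone Sm Sp AC RA y <-> partition_productive_cone Sm Sp AC RA y.
Proof.
move=> [x0 [x0pos x0cl]] [Hexcl _] _ [hcard Hinj] hSA y.
set SA := MAS_species Sm Sp RA in hSA *.
have [ACne RAne [w [wpos wprod]] ACin _] := Hexcl.
have ACsub : AC \subset SA.
  apply/subsetP => c /ACin [r Hr Hpos]; rewrite inE; apply/existsP; exists r.
  by rewrite Hr Hpos.
have stoich0 s r : r \in RA -> s \notin SA -> stoich R Sm Sp s r = 0.
  move=> Hr; rewrite inE negb_exists => /forallP /(_ r); rewrite Hr /= negb_or -!leqNgt !leqn0.
  by case/andP => /eqP e1 /eqP e2; rewrite /stoich e1 e2 subrr.
have orth x v : conservation_law Sm Sp x ->
    \sum_(s in SA) x s * (\sum_(r in RA) stoich R Sm Sp s r * v r) = 0.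
  move=> cl; under eq_bigr do rewrite mulr_sumr.
  rewrite exchange_big /= big1 // => r Hr.
  transitivity (\sum_s x s * stoich R Sm Sp s r * v r).
    rewrite big_mkcond; apply: eq_bigr => s _; case: ifP => h; first by rewrite mulrA.
    by rewrite (stoich0 _ _ Hr (negbT h)) mulr0 mul0r.
  by rewrite -mulr_suml cl mul0r.
have : #|SA :\: AC| == 1%N by rewrite cardsD (setIidPr ACsub) hSA subSnn.
case/cards1P => z hz.
have zAC : z \notin AC by have := set11 z; rewrite -hz; case/setDP.
have zSA : z \in SA by have := set11 z; rewrite -hz; case/setDP.
have memz s : (s \in SA) = (s == z) || (s \in AC).
  case: (boolP (s \in AC)) => hs; first by rewrite orbT (subsetP ACsub).
  have e : (s \in SA :\: AC) = (s \in [set z]) by rewrite hz.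
  by rewrite in_setD in_set1 hs /= in e; rewrite orbF e.
have splitSA (f : S -> R) : \sum_(s in SA) f s = f z + \sum_(c in AC) f c.
  rewrite (bigD1 z) //=; congr (_ + _); apply: eq_bigl => s.
  rewrite memz; case: (eqVneq s z) => [->|] //=; rewrite ?andbT ?andbF //; by rewrite (negbTE zAC).
have notwaste : z \notin waste_set R Sm Sp RA.
  apply/negP => /setIdP [_ /forallP Hw].
  have := orth x0 w x0cl; rewrite splitSA.
  have h1 : 0 <= x0 z * \sum_(r in RA) stoich R Sm Sp z r * w r.
    apply: mulr_ge0; first exact: ltW (x0pos z).
    apply: sumr_ge0 => r hr; apply: mulr_ge0; last exact: ltW (wpos r hr).
    by have := Hw r; rewrite hr.
  have [c0 hc0] := set0Pn _ ACne.
  rewrite (bigD1 c0) //=.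
  have h2 := mulr_gt0 (x0pos c0) (wprod c0 hc0).
  have h3 : 0 <= \sum_(c in AC | c != c0) x0 c * \sum_(r in RA) stoich R Sm Sp c r * w r.
    apply: sumr_ge0 => c /andP [hc _]; apply: mulr_ge0; apply: ltW => //.
    exact: wprod.
  lra.
have notfoodAC c : c \in AC -> c \notin food_set R Sm Sp RA.
  move=> hc; apply/negP => /setIdP [_ /forallP Hf].
  have : \sum_(r in RA) stoich R Sm Sp c r * w r <= 0.
    rewrite -oppr_ge0 -sumrN; apply: sumr_ge0 => r hr; rewrite -mulNr mulr_ge0 //.
      by rewrite oppr_ge0; have := Hf r; rewrite hr.
    exact: ltW (wpos r hr).
  have := wprod c hc; lra.
have zfood : z \notin TMC R Sm Sp AC RA -> z \in food_set R Sm Sp RA.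
  move=> hT; apply/setIdP; split => //; apply/forallP => r; apply/implyP => hr.
  rewrite leNgt; apply/negP => hpos.
  have : ~~ [forall r in RA, 0 <= stoich R Sm Sp z r].
    by apply/negP => h; move: notwaste; rewrite inE zSA h.
  rewrite negb_forall => /existsP [r' ]; rewrite negb_imply -ltNge => /andP [hr' hneg].
  move: hT; rewrite inE zAC /=; apply/negP; rewrite negbK inE zSA /=.
  by apply/andP; split; apply/existsP; [exists r | exists r']; apply/andP.

have BTsub p : p \in BT R Sm Sp AC RA -> p.1 \in SA.
  rewrite inE; case/or4P => [/andP [/setIdP [h _] _]|/andP [/setIdP [h _] _]|
                           /setDP [/setIdP [h _] _]|/andP [h _]] //.
  exact: (subsetP ACsub).
split.
- move=> [Hout [u [upos [v [Hv Hy]]]]]; split.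
  + apply/in_coneP => t.
    case: (boolP (t \in SA)) => htS; last by rewrite (Hout t htS) ltxx.
    rewrite memz in htS; case/orP: htS => [/eqP ->|htA].
    * case: (boolP (z \in TMC R Sm Sp AC RA)) => hT.
        by split=> _; rewrite inE /= hT !orbT.
      have zf := zfood hT.
      have e1 := orth x0 v x0cl; rewrite splitSA -(Hy z zSA) in e1.
      have e2 : \sum_(c in AC) x0 c * \sum_(r in RA) stoich R Sm Sp c r * v r >= 0.
        apply: sumr_ge0 => c hc; rewrite Hv //; apply: mulr_ge0; [exact: ltW (x0pos c)|].
        exact: upos.
      have yz : y z <= 0.
        rewrite leNgt; apply/negP => h; have := mulr_gt0 (x0pos z) h.
        lra.
      split=> h; first by move: yz; rewrite leNgt h.
      by rewrite inE /= zf.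
    * have hy : 0 <= y t by rewrite Hy ?Hv ?upos // (subsetP ACsub).
      split=> h; first by rewrite inE /= htA !orbT.
      by move: hy; rewrite leNgt h.
  + move=> x cl; rewrite (eq_bigr (fun s => x s * \sum_(r in RA) stoich R Sm Sp s r * v r)); first exact: orth.
    by move=> s hs; rewrite Hy.
- move=> [/in_coneP Hc Horth].
  have Hout s : s \notin SA -> y s = 0.
    move=> hs; have [h1 h2] := Hc s.
    case: (ltgtP (y s) 0) => // h; [move: (h2 h)|move: (h1 h)] => /BTsub /=;
      by rewrite (negbTE hs).
  have upos c : c \in AC -> 0 <= y c.
    move=> hc; rewrite leNgt; apply/negP => h; have := (Hc c).2 h; rewrite inE /=.
    case/or4P => [/andP [hf _]|/andP [_ //]|/setDP [_ hn]|/andP [_ //]].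
      by move: hf; rewrite (negbTE (notfoodAC c hc)).
    by rewrite hc in hn.
  have [v Hv] := surj_lemma hcard Hinj y.
  split; first exact: Hout.
  exists y; split; first exact: upos.
  exists v; split; first exact: Hv.
  move=> s; rewrite memz; case/orP => [/eqP ->|hs]; last by rewrite Hv.
  have e1 := Horth x0 x0cl; have e2 := orth x0 v x0cl; rewrite splitSA in e1; rewrite splitSA in e2.
  have e3 : \sum_(c in AC) x0 c * \sum_(r in RA) stoich R Sm Sp c r * v r =
            \sum_(c in AC) x0 c * y c by apply: eq_bigr => c hc; rewrite Hv.
  apply: (mulfI (negbT (gt_eqF (x0pos z)))).
  lra.
Qed.
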